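(* Let $K=\mathsf{p}^k$ and let $\mathcal{C}\subset (\mathbb{C}^{\mathsf{p}})^{\otimes n}$ be a subspace with orthonormal basis $\{\psi_\alpha\}_{\alpha\in [K]}$ such that, for some $\gamma>0$, \[ \big|\langle\psi_\alpha| F|\psi_\beta\rangle-\delta_{\alpha,\beta}\langle\psi_1| F|\psi_1\rangle\big|\leq \gamma\, \|F\|\qquad\text{for all }\alpha,\beta\in [K] \] and for every $d$-local operator $F$ on $(\mathbb{C}^{\mathsf{p}})^{\otimes n}$. Let $\delta > K^5\gamma^2$. Then $\mathcal{C}$ is an $(\epsilon,\delta)[[n,k,d]]$-AQEDC with $\epsilon=K^5\gamma^2 \delta^{-1}$.
   Context: An operator on $(\mathbb{C}^\mathsf{p})^{\otimes n}$ is $d$-local if it is of the form $F_S\otimes I_{[n]\setminus S}$ for some set $S\subset[n]$ of $d$ sites (the sites need not be contiguous); $\|\cdot\|$ is the operator norm. For a CPTP map $\mathcal{N}$ on $\mathcal{B}((\mathbb{C}^\mathsf{p})^{\otimes n})$ and a subspace $\mathcal{C}$ with projection $P$, $\mathcal{C}$ is an $(\epsilon,\delta)$-approximate error-detection code for $\mathcal{N}$ if for every unit vector $|\Psi\rangle\in\mathcal{C}$: if $\mathrm{tr}(P\mathcal{N}(|\Psi\rangle\langle\Psi|))\geq\delta$ then $\langle\Psi|\rho_{\mathcal{N},P}|\Psi\rangle\geq 1-\epsilon$, where $\rho_{\mathcal{N},P}=\mathrm{tr}(P\mathcal{N}(|\Psi\rangle\langle\Psi|))^{-1}P\mathcal{N}(|\Psi\rangle\langle\Psi|)P$.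 An $(\epsilon,\delta)[[n,k,d]]$-AQEDC is a $\mathsf{p}^k$-dimensional subspace $\mathcal{C}\subset(\mathbb{C}^\mathsf{p})^{\otimes n}$ which is an $(\epsilon,\delta)$-approximate error-detection code for every CPTP map of the form $\mathcal{N}(\rho)=\sum_{j\in[J]}p_jF_j\rho F_j^\dagger$, where each $F_j$ is $d$-local with $\|F_j\|\le 1$ and $\{p_j\}$ is a probability distribution. *)

(* Defs.v *)
From HB Require Import structures.
From mathcomp Require Import all_boot all_order all_algebra.
From mathcomp Require Import classical_sets reals.
From mathcomp Require Import complex.
Set Implicit Arguments. Unset Strict Implicit. Unset Printing Implicit Defensive.
Import Order.TTheory GRing.Theory Num.Theory.
Local Open Scope ring_scope.
Local Open Scope classical_set_scope.

(* Computational basis of (C^p)^{⊗n}: configurations x : [n] -> [p]. *)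
Definition cfg (p n : nat) := {ffun 'I_n -> 'I_p}.
(* dimension p^n of the Hilbert space (as #|cfg p n|); basis vector with
   index i : 'I_(hdim p n) is |enum_val i>. *)
Definition hdim (p n : nat) := #|{: cfg p n}|.

Section Defs.
Variable R : realType.
Local Notation C := (R[i]).
Variables p n : nat.
Local Notation N := (hdim p n).
Local Notation op := ('M[C]_N).
Local Notation vec := ('cV[C]_N).

Definition adj (m1 m2 : nat) (A : 'M[C]_(m1, m2)) : 'M[C]_(m2, m1) :=
  (map_mx (@conjc R) A)^T.

Definition vnorm (v : vec) : R :=
  Num.sqrt (\sum_i (Normc.normc (v i 0)) ^+ 2).

Definition opnorm (A : op) : R :=
  sup [set vnorm (A *m v) | v in [set v : vec | vnorm v = 1]].

Definition agree_on (S : {set 'I_n}) (x y : cfg p n) : bool :=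
  [forall i in S, x i == y i].

(* A is d-local: A = F_S (x) I_{[n]\S} for a set S of d sites, i.e. its
   matrix entries are <x|A|y> = <x_S|F_S|y_S> * [x_{S^c} = y_{S^c}], where
   the entries of F_S only depend on the restrictions x_S, y_S. *)
Definition dlocal (d : nat) (A : op) : Prop :=
  exists S : {set 'I_n}, #|S| = d /\
  exists G : cfg p n -> cfg p n -> C,
    (forall x y x' y', agree_on S x x' -> agree_on S y y' -> G x y = G x' y') /\
    (forall i j : 'I_N, A i j =
       if agree_on (~: S) (enum_val i) (enum_val j)
       then G (enum_val i) (enum_val j) else 0).

Definition braket (u : vec) (A : op) (v : vec) : C := (adj u *m A *m v) 0 0.

Definition is_onfamily (K : nat) (psi : 'I_K -> vec) : Prop :=
  forall a b, (adj (psi a) *m psi b) 0 0 = (a == b)%:R.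

Definition codeproj (K : nat) (psi : 'I_K -> vec) : op :=
  \sum_a (psi a *m adj (psi a)).

Definition approx_detect (Nch : op -> op) (P : op) (eps delta : R) : Prop :=
  forall Psi : vec, vnorm Psi = 1 -> P *m Psi = Psi ->
    let rho := Psi *m adj Psi in
    let t := \tr (P *m Nch rho) in
    delta <= complex.Re t ->
    1 - eps <= complex.Re (braket Psi (t^-1 *: (P *m Nch rho *m P)) Psi).

(* (eps,delta)[[n,k,d]]-AQEDC: the span of the orthonormal family psi
   (of size p^k) detects every CPTP map N(rho) = sum_j p_j F_j rho F_j^dag
   with each F_j d-local, ||F_j|| <= 1, {p_j} a probability distribution. *)
Definition AQEDC (k d : nat) (eps delta : R) (psi : 'I_(p ^ k) -> vec) : Prop :=
  is_onfamily psi /\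
  forall (J : nat) (pr : 'I_J -> R) (F : 'I_J -> op),
    (forall j, 0 <= pr j) -> \sum_j pr j = 1 ->
    (forall j, dlocal d (F j)) -> (forall j, opnorm (F j) <= 1) ->
    \sum_j (((pr j)%:C)%C *: (adj (F j) *m F j)) = 1%:M ->
    approx_detect (fun rho => \sum_j (((pr j)%:C)%C *: (F j *m rho *m adj (F j))))
                  (codeproj psi) eps delta.
End Defs.

(* Main.v *)
Require Import Defs.
From HB Require Import structures.
From mathcomp Require Import all_boot all_order all_algebra.
From mathcomp Require Import classical_sets reals.
From mathcomp Require Import complex.
From mathcomp Require Import ring lra.
Import Order.TTheory GRing.Theory Num.Theory.
Local Open Scope ring_scope. Local Open Scope complex_scope.
Section S.
Variable R : realType.
Local Notation C := (R[i]).
Local Notation nc := (@Normc.normc R).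

Lemma ncC (x : C) : (nc x)%:C = `|x|. Proof. by []. Qed.
Lemma nc2 (x : C) : ((nc x ^+ 2)%:C) = x * x^*.
Proof. by rewrite rmorphXn /= ncC sqr_normc. Qed.
Lemma nc_ge0 (x : C) : 0 <= nc x.
Proof. by rewrite -lecR ncC normr_ge0. Qed.
Lemma ncM (x y : C) : nc (x * y) = nc x * nc y. Proof. exact: Normc.normcM. Qed.
Lemma nc_sum m (G : 'I_m -> C) : nc (\sum_i G i) <= \sum_i nc (G i).
Proof. rewrite -lecR rmorph_sum /=. exact: (@ler_norm_sum _ C _ _ G). Qed.

Lemma key m (c : 'I_m -> C) (B : 'I_m -> 'I_m -> C) (lam : C) (g : R) :
  \sum_a (c a)^* * c a = 1 ->
  (forall a b, nc (B a b - (a == b)%:R * lam) <= g) ->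
  \sum_a nc (\sum_b c b * B a b) ^+ 2
   - nc (\sum_a (c a)^* * \sum_b c b * B a b) ^+ 2 <= m%:R ^+ 3 * g ^+ 2.
Proof.
move=> hS hB.
pose E a b := B a b - (a == b)%:R * lam.
pose e a := \sum_b c b * E a b.
pose s := \sum_a (c a)^* * e a.
have hu a : \sum_b c b * B a b = c a * lam + e a.
  have -> : \sum_b c b * B a b = \sum_b (c b * ((a == b)%:R * lam) + c b * E a b).
    by apply: eq_bigr => b _; rewrite /E; ring.
  rewrite big_split /=; congr (_ + _).
  rewrite (bigD1 a) //= eqxx big1 ?addr0 ?mul1r //.
  by move=> b nb; rewrite eq_sym (negbTE nb) mul0r mulr0.
have hw : \sum_a (c a)^* * \sum_b c b * B a b = lam + s.
  under eq_bigr do rewrite hu mulrDr.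
  rewrite big_split /= -/s; congr (_ + _).
  by rewrite -[RHS]mulr1 -hS mulr_sumr; apply: eq_bigr => a _; ring.
have hSR : \sum_a nc (c a) ^+ 2 = 1.
  apply: complexI; rewrite rmorph_sum /= rmorph1 -hS.
  by apply: eq_bigr => a _; rewrite nc2 mulrC.
have hc b : nc (c b) <= 1.
  have h0 := nc_ge0 (c b).
  have : nc (c b) ^+ 2 <= 1.
    rewrite -hSR (bigD1 b) //= lerDl sumr_ge0 // => a _; exact: sqr_ge0.
  nra.
have he a : nc (e a) <= m%:R * g.
  rewrite /e; apply: (le_trans (nc_sum _ (fun b => c b * E a b))).
  have -> : m%:R * g = \sum_(b < m) g by rewrite sumr_const card_ord mulr_natl.
  apply: ler_sum => b _; rewrite ncM.
  have := hc b; have := hB a b; have := nc_ge0 (c b); have := nc_ge0 (E a b).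
  rewrite /E; nra.
have hid : (\sum_a nc (\sum_b c b * B a b) ^+ 2
   - nc (\sum_a (c a)^* * \sum_b c b * B a b) ^+ 2)%:C
   = \sum_a e a * (e a)^* - s * s^*.
  rewrite rmorphB rmorph_sum /= hw nc2.
  under eq_bigr do rewrite hu nc2.
  rewrite ?rmorphD ?rmorphM /=.
  have -> : \sum_a (c a * lam + e a) * (c a * lam + e a)^*
     = lam * lam^* * (\sum_a (c a)^* * c a) + lam * (\sum_a (c a)^* * e a)^*
       + lam^* * s + \sum_a e a * (e a)^*.
    rewrite rmorph_sum /= !mulr_sumr -!big_split /=; apply: eq_bigr => a _.
    rewrite !rmorphD !rmorphM /= [X in lam * (X * _)](_ : _ = c a); [ring | exact: conjcK].
  rewrite hS -/s; ring.
have : (\sum_a nc (\sum_b c b * B a b) ^+ 2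
   - nc (\sum_a (c a)^* * \sum_b c b * B a b) ^+ 2) <= \sum_(a < m) nc (e a) ^+ 2.
  rewrite -lecR hid.
  have -> : ((\sum_a nc (e a) ^+ 2)%:C) = \sum_a e a * (e a)^*.
    by rewrite rmorph_sum; apply: eq_bigr => a _; exact: nc2.
  by rewrite lerBlDr lerDl mulcJ_ge0.
move=> h; apply: (le_trans h).
have -> : m%:R ^+ 3 * g ^+ 2 = \sum_(a < m) (m%:R * g) ^+ 2.
  by rewrite sumr_const card_ord -mulr_natl; ring.
apply: ler_sum => a _; have := he a; have := nc_ge0 (e a); nra.
Qed.

Local Notation "A ^H" := (adj A) (at level 8, format "A ^H").

Lemma adjE m1 m2 (A : 'M[C]_(m1, m2)) i j : (adj A) i j = (A j i)^*.
Proof. by rewrite !mxE. Qed.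

Lemma adjM m1 m2 m3 (A : 'M[C]_(m1, m2)) (B : 'M[C]_(m2, m3)) :
  adj (A *m B) = adj B *m adj A.
Proof. by rewrite /adj map_mxM trmx_mul. Qed.

Lemma adjK m1 m2 (A : 'M[C]_(m1, m2)) : adj (adj A) = A.
Proof. apply/matrixP => i j; rewrite !adjE; exact: conjcK. Qed.

Lemma mx11M (A B : 'M[C]_1) : (A *m B) 0 0 = A 0 0 * B 0 0.
Proof. by rewrite mxE big_ord1. Qed.

Lemma adj_sum I (r : seq I) m1 m2 (G : I -> 'M[C]_(m1, m2)) :
  adj (\sum_(i <- r) G i) = \sum_(i <- r) adj (G i).
Proof.
apply/matrixP => i j; rewrite adjE !summxE rmorph_sum; apply: eq_bigr => k _.
by rewrite adjE.
Qed.

Lemma trace11 (A : 'M[C]_1) : \tr A = A 0 0.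
Proof. by rewrite /mxtrace big_ord1. Qed.
End S.

Theorem corollary1 (R : realType) (p n k d : nat)
  (psi : 'I_(p ^ k) -> 'cV[R[i]]_(hdim p n)) (i1 : 'I_(p ^ k))
  (gamma delta : R) :
  val i1 = 0%N ->
  is_onfamily psi ->
  0 < gamma ->
  (forall F : 'M[R[i]]_(hdim p n), dlocal d F ->
     forall a b : 'I_(p ^ k),
       Normc.normc (braket (psi a) F (psi b)
                    - (a == b)%:R * braket (psi i1) F (psi i1))
       <= gamma * opnorm F) ->
  ((p ^ k)%:R ^+ 5 * gamma ^+ 2 < delta) ->
  @AQEDC R p n k d ((p ^ k)%:R ^+ 5 * gamma ^+ 2 / delta) delta psi.
Proof.
move=> _ hon hg hloc hM; split => //.
move=> J pr F hpr hsum hlocF hnF _ Psi hPsi1 HP /=.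
set K := (p ^ k)%N.
set P := codeproj psi.
pose c a := (adj (psi a) *m Psi) 0 0.
have hadjP : adj P = P.
  rewrite /P /codeproj adj_sum; apply: eq_bigr => a _; by rewrite adjM adjK.
have hPsiL : adj Psi *m P = adj Psi by rewrite -hadjP -adjM HP.
have hPsiE : Psi = \sum_a c a *: psi a.
  rewrite -{1}HP /P /codeproj mulmx_suml; apply: eq_bigr => a _.
  by rewrite -mulmxA [adj (psi a) *m Psi]mx11_scalar mul_mx_scalar.
have hX (X : 'M[R[i]]_(1, hdim p n)) :
    (X *m Psi) 0 0 = \sum_b c b * (X *m psi b) 0 0.
  rewrite [in LHS]hPsiE mulmx_sumr summxE; apply: eq_bigr => b _.
  by rewrite -scalemxAr mxE.
have hw (G : 'M[R[i]]_(hdim p n)) :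
    (adj Psi *m G *m Psi) 0 0 = \sum_a (c a)^* * (adj (psi a) *m G *m Psi) 0 0.
  rewrite -[in LHS]hPsiL /P /codeproj mulmx_sumr !mulmx_suml summxE.
  apply: eq_bigr => a _.
  rewrite -!mulmxA mulmxA mx11M; congr (_ * _).
  by rewrite -[psi a]adjK -adjM adjE.
have hS : \sum_a (c a)^* * c a = 1.
  have := hw 1%:M; rewrite mulmx1.
  under eq_bigr do rewrite mulmx1.
  move=> <-.
  move: hPsi1; rewrite /vnorm => h1.
  have hS0 : 0 <= \sum_i Normc.normc (Psi i 0) ^+ 2.
    by apply: sumr_ge0 => i _; exact: sqr_ge0.
  have hS1 : \sum_i Normc.normc (Psi i 0) ^+ 2 = 1.
    by rewrite -(sqr_sqrtr hS0) h1 expr1n.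
  rewrite mxE.
  have -> : 1 = ((\sum_i Normc.normc (Psi i 0) ^+ 2)%:C)%C :> R[i] by rewrite hS1.
  rewrite rmorph_sum; apply: eq_bigr => i _; rewrite adjE mulrC; symmetry; exact: nc2.

pose u (G : 'M[R[i]]_(hdim p n)) a := (adj (psi a) *m G *m Psi) 0 0.
have hu G a : u G a = \sum_b c b * braket (psi a) G (psi b).
  by rewrite /u hX.
have htr (G : 'M[R[i]]_(hdim p n)) :
    \tr (P *m (G *m (Psi *m adj Psi) *m adj G)) = \sum_a u G a * (u G a)^*.
  rewrite /P /codeproj mulmx_suml raddf_sum /=; apply: eq_bigr => a _.
  rewrite -mulmxA mxtrace_mulC trace11 !mulmxA.
  rewrite -[adj (psi a) *m G *m Psi *m adj Psi *m adj G *m psi a]mulmxA.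
  rewrite -[adj (psi a) *m G *m Psi *m adj Psi *m (adj G *m psi a)]mulmxA.
  rewrite mx11M; congr (_ * _).
  by rewrite -[psi a]adjK -!adjM adjE.
have hin (G : 'M[R[i]]_(hdim p n)) :
    (adj Psi *m (G *m (Psi *m adj Psi) *m adj G) *m Psi) 0 0
    = (adj Psi *m G *m Psi) 0 0 * ((adj Psi *m G *m Psi) 0 0)^*.
  rewrite !mulmxA -[adj Psi *m G *m Psi *m adj Psi *m adj G *m Psi]mulmxA.
  rewrite -[adj Psi *m G *m Psi *m adj Psi *m (adj G *m Psi)]mulmxA mx11M.
  congr (_ * _).
  by rewrite -{2}[Psi]adjK -!adjM adjE.

set Y := \sum_(j < J) _.
pose T := \sum_j pr j * \sum_a Normc.normc (u (F j) a) ^+ 2.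
pose w (G : 'M[R[i]]_(hdim p n)) := (adj Psi *m G *m Psi) 0 0.
pose W := \sum_j pr j * Normc.normc (w (F j)) ^+ 2.
have ht : \tr (P *m Y) = (T%:C)%C.
  rewrite /Y mulmx_sumr raddf_sum /= rmorph_sum; apply: eq_bigr => j _.
  rewrite -scalemxAr mxtraceZ htr rmorphM rmorph_sum /=; congr (_ * _).
  by apply: eq_bigr => a _; symmetry; exact: nc2.
have hb : (adj Psi *m (P *m Y *m P) *m Psi) 0 0 = (W%:C)%C.
  rewrite !mulmxA hPsiL -mulmxA HP /Y mulmx_sumr mulmx_suml summxE rmorph_sum.
  apply: eq_bigr => j _.
  rewrite -scalemxAr -scalemxAl mxE hin rmorphM /=; congr (_ * _).
  symmetry; exact: nc2.
rewrite ht /braket -scalemxAr -scalemxAl mxE hb -fmorphV -rmorphM /=.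
move=> hdT.

have hj j : \sum_a Normc.normc (u (F j) a) ^+ 2 - Normc.normc (w (F j)) ^+ 2
            <= K%:R ^+ 3 * gamma ^+ 2.
  have hB : forall a b, Normc.normc (braket (psi a) (F j) (psi b)
                    - (a == b)%:R * braket (psi i1) (F j) (psi i1)) <= gamma.
    move=> a b; apply: le_trans (hloc _ (hlocF j) a b) _.
    have := hnF j; have := ltW hg; nra.
  have K0 := @key R _ _ _ _ _ hS hB.
  suff -> : \sum_a Normc.normc (u (F j) a) ^+ 2 - Normc.normc (w (F j)) ^+ 2
    = \sum_a Normc.normc (\sum_b c b * braket (psi a) (F j) (psi b)) ^+ 2 -
       Normc.normc (\sum_a (c a)^* * \sum_b c b * braket (psi a) (F j) (psi b)) ^+ 2
    by exact: K0.
  congr (_ - _).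
    by apply: eq_bigr => a _; rewrite hu.
  rewrite /w hw; congr (Normc.normc _ ^+ 2); apply: eq_bigr => a _.
  by rewrite -hu.
have hTW : T - W <= K%:R ^+ 3 * gamma ^+ 2.
  rewrite /T /W -sumrB.
  apply: (@le_trans _ _ (\sum_j pr j * (K%:R ^+ 3 * gamma ^+ 2))).
    apply: ler_sum => j _; rewrite -mulrBr; apply: ler_wpM2l; [exact: hpr | exact: hj].
  by rewrite -mulr_suml hsum mul1r.
have hK : (0 < p ^ k)%N := leq_ltn_trans (leq0n _) (ltn_ord i1).
have hK1 : (1 : R) <= K%:R by rewrite ler1n.
have hK35 : K%:R ^+ 3 * gamma ^+ 2 <= K%:R ^+ 5 * gamma ^+ 2.
  apply: ler_wpM2r; first exact: sqr_ge0.
  rewrite -[5%N]/(3 + 2)%N exprD ler_peMr ?exprn_ge0 ?expr_ge1 //.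
move: hdT; rewrite /= => hdT.
set M := K%:R ^+ 5 * gamma ^+ 2 in hM hK35 *.
have hM0 : 0 <= M.
  by apply: mulr_ge0; [apply: exprn_ge0; exact: ler0n | exact: sqr_ge0].
have hd0 : 0 < delta by apply: le_lt_trans hM0 hM.
have hT0 : 0 < T by apply: lt_le_trans hd0 hdT.
set q := M / delta.
have hq : q * delta = M by rewrite /q divfK // gt_eqF.
have hq0 : 0 <= q by rewrite /q divr_ge0 // ltW.
rewrite mulrC ler_pdivlMr //.
nra.
Qed.
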